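(* Under Assumption 1, if for every $k\in N$ the polyhedral set $S_k$ is empty, then the convex relaxation (R) and the Shor relaxation (S) are exact, i.e. $p^\star=v^\star=c^\star$.
   Context: Let $N=\{1,\dots,n\}$ and $M=\{1,\dots,m\}$. Let ${\bf D}$ and ${\bf A}^i$ ($i\in M$) be real diagonal $n\times n$ matrices, ${\bf c},{\bf a}_i\in\mathbb{R}^n$ ($a_{ij}$ denotes the $j$-th entry of ${\bf a}_i$) and $b_i\in\mathbb{R}$. The diagonal QCQP is (P): $c^\star=\inf\{{\bf x}^\top{\bf D}{\bf x}+2{\bf c}^\top{\bf x} : {\bf x}^\top{\bf A}^i{\bf x}+2{\bf a}_i^\top{\bf x}\le b_i,\ i\in M\}$. Its Shor relaxation is (S): $v^\star=\inf\{{\bf D}\bullet{\bf X}+2{\bf c}^\top{\bf x} : {\bf A}^i\bullet{\bf X}+2{\bf a}_i^\top{\bf x}\le b_i\ (i\in M),\ {\bf X}-{\bf x}{\bf x}^\top\succeq {\bf O}\}$, where ${\bf P}\bullet{\bf Q}=\mathrm{trace}({\bf P}{\bf Q})$. The convex relaxation is (R): $p^\star=\inf\{\sum_{j\in N}D_{jj}z_j+2\sum_{j\in N}c_jx_j : \sum_{j\in N}A^i_{jj}z_j+2\sum_{j\in N}a_{ij}x_j\le b_i\ (i\in M),\ x_j^2\le z_j\ (j\in N)\}$. Assumption 1: (i) the feasible region of (P) is nonempty; (ii) there exists $\bar{\bf y}\in\mathbb{R}^m$, $\bar{\bf y}\ge 0$, with $\sum_{i\in M}\bar y_i{\bf A}^i\succ{\bf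 O}$; (iii) the feasible region of (S) has nonempty interior. For $k\in N$, $S_k$ is the set of $\boldsymbol{\mu}\in\mathbb{R}^m$ satisfying: $D_{kk}+\sum_{i\in M}\mu_iA^i_{kk}=0$; $c_k+\sum_{i\in M}\mu_ia_{ik}=0$; $D_{jj}+\sum_{i\in M}\mu_iA^i_{jj}\ge 0$ for all $j\in N$, $j\ne k$; $\mu_i\ge 0$ for all $i\in M$. *)

(* Defs.v *)
From HB Require Import structures.
From mathcomp Require Import all_boot all_order all_algebra.
From mathcomp Require Import boolp classical_sets reals constructive_ereal ereal.
Set Implicit Arguments. Unset Strict Implicit. Unset Printing Implicit Defensive.
Import Order.TTheory GRing.Theory Num.Theory.
Local Open Scope ring_scope.
Local Open Scope classical_set_scope.

Section QCQP.
Variable R : realType.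

Definition quadf n (M : 'M[R]_n) (x : 'cV[R]_n) : R := (x^T *m M *m x) 0 0.
Definition linf n (c x : 'cV[R]_n) : R := (c^T *m x) 0 0.
Definition frob n (P Q : 'M[R]_n) : R := \tr (P *m Q).

Definition psd n (M : 'M[R]_n) : Prop :=
  M^T = M /\ forall v : 'cV[R]_n, 0 <= quadf M v.
Definition posdef n (M : 'M[R]_n) : Prop :=
  M^T = M /\ forall v : 'cV[R]_n, v != 0 -> 0 < quadf M v.

Variables (n m : nat) (D : 'M[R]_n) (A : 'I_m -> 'M[R]_n)
  (c : 'cV[R]_n) (a : 'I_m -> 'cV[R]_n) (b : 'I_m -> R).

Definition P_feas : set 'cV[R]_n :=
  [set x | forall i, quadf (A i) x + 2 * linf (a i) x <= b i].
Definition cstar : \bar R :=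
  ereal_inf [set (quadf D x + 2 * linf c x)%:E | x in P_feas].

Definition S_feas : set ('cV[R]_n * 'M[R]_n) :=
  [set p : 'cV[R]_n * 'M[R]_n | (forall i, frob (A i) p.2 + 2 * linf (a i) p.1 <= b i)
           /\ psd (p.2 - p.1 *m p.1^T)].
Definition vstar : \bar R :=
  ereal_inf [set (frob D p.2 + 2 * linf c p.1)%:E | p in S_feas].

Definition R_feas : set ('cV[R]_n * 'cV[R]_n) :=
  [set p : 'cV[R]_n * 'cV[R]_n | (forall i, \sum_(j < n) A i j j * p.2 j 0
                      + 2 * \sum_(j < n) a i j 0 * p.1 j 0 <= b i)
           /\ (forall j, p.1 j 0 ^+ 2 <= p.2 j 0)].
Definition pstar : \bar R :=
  ereal_inf [set (\sum_(j < n) D j j * p.2 j 0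
                  + 2 * \sum_(j < n) c j 0 * p.1 j 0)%:E | p in R_feas].

(* Assumption 1 (iii): the feasible region of (S) has nonempty interior,
   as a subset of R^n x (symmetric n x n matrices), using the (equivalent)
   max-norm balls on coordinates. *)
Definition S_nonempty_interior : Prop :=
  exists (x0 : 'cV[R]_n) (X0 : 'M[R]_n), X0^T = X0 /\ exists2 e : R, 0 < e &
    forall (x : 'cV[R]_n) (X : 'M[R]_n), X^T = X ->
      (forall j, `|x j 0 - x0 j 0| < e) ->
      (forall j k, `|X j k - X0 j k| < e) ->
      S_feas (x, X).

Definition Assumption1 : Prop :=
  (exists x, P_feas x) /\
  (exists y : 'I_m -> R, (forall i, 0 <= y i) /\ posdef (\sum_i y i *: A i)) /\
  S_nonempty_interior.

Definition S_set (k : 'I_n) : set ('I_m -> R) :=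
  [set mu | D k k + \sum_i mu i * A i k k = 0
            /\ c k 0 + \sum_i mu i * a i k 0 = 0
            /\ (forall j, j != k -> 0 <= D j j + \sum_i mu i * A i j j)
            /\ (forall i, 0 <= mu i)].

End QCQP.

(* Main.v *)
Require Import Defs.
From HB Require Import structures.
From mathcomp Require Import all_boot all_order all_algebra.
From mathcomp Require Import boolp classical_sets reals constructive_ereal ereal.
From mathcomp Require Import topology normedtype derive.
From mathcomp Require Import ring lra.
From Stdlib Require List.
Set Implicit Arguments. Unset Strict Implicit. Unset Printing Implicit Defensive.
Import Order.TTheory GRing.Theory Num.Theory.
Import numFieldNormedType.Exports.
Local Open Scope ring_scope.
Local Open Scope classical_set_scope.

Section Farkas.
Variable R : realFieldType.

Definition dotn d (w y : nat -> R) : R := \sum_(i < d) w i * y i.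
Definition comb (a : R) (p : (nat -> R) * R) (b : R) (q : (nat -> R) * R) :
  (nat -> R) * R := (fun i => a * p.1 i + b * q.1 i, a * p.2 + b * q.2).

Inductive fmder (C : list ((nat -> R) * R)) : (nat -> R) * R -> Prop :=
 | d_base p : List.In p C -> fmder C p
 | d_comb p q a b : fmder C p -> fmder C q -> 0 <= a -> 0 <= b ->
     fmder C (comb a p b q).

Lemma deriv_trans C C' q : (forall p, List.In p C' -> fmder C p) ->
  fmder C' q -> fmder C q.
Proof. move=> H; elim => [p /H //|p0 q0 a b _ H1 _ H2 ha hb]; exact: d_comb. Qed.

Lemma dotn_comb d a p b q y :
  dotn d (comb a p b q).1 y = a * dotn d p.1 y + b * dotn d q.1 y.
Proof.
rewrite /dotn /= !mulr_sumr -big_split /=; apply: eq_bigr => i _; ring.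
Qed.

Lemma sep_lu (L U : list R) : (forall l u, List.In l L -> List.In u U -> l <= u) ->
  exists t, (forall l, List.In l L -> l <= t) /\ (forall u, List.In u U -> t <= u).
Proof.
elim: L => [|l L IH] H.
  elim: U {H} => [|u U [t [_ Ht]]]; first by exists 0.
  exists (Num.min u t); split => // v /= [<-|hv]; first by rewrite ge_min lexx.
  by rewrite ge_min Ht // orbT.
have [t [Ht1 Ht2]] : exists t, (forall l, List.In l L -> l <= t) /\
   (forall u, List.In u U -> t <= u).
  by apply: IH => l' u hl hu; apply: H => //=; right.
exists (Num.max l t); split => [l' /= [<-|hl]|u hu].
- by rewrite le_max lexx.
- by rewrite le_max Ht1 // orbT.
- by rewrite ge_max Ht2 // andbT; apply: H => //=; left.
Qed.

Lemma frac_le (pd qd X Y : R) : 0 < pd -> qd < 0 -> pd * X - qd * Y <= 0 ->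
  - X / qd <= - Y / pd.
Proof.
move=> hp hq h.
have hq' : qd != 0 by rewrite lt_eqF.
have hp' : pd != 0 by rewrite gt_eqF.
rewrite -subr_ge0.
have -> : - Y / pd - - X / qd = (pd * X - qd * Y) / (pd * qd).
  by field; rewrite hp' hq'.
apply: mulr_le0; first by [].
by rewrite invr_le0; apply: ltW; rewrite pmulr_rlt0.
Qed.

Lemma inF (T : Type) (f : T -> bool) l x : List.In x (List.filter f l) -> List.In x l /\ f x.
Proof. by move/List.filter_In. Qed.
Lemma Fin (T : Type) (f : T -> bool) l x : List.In x l -> f x -> List.In x (List.filter f l).
Proof. by move=> h1 h2; apply/List.filter_In. Qed.
Lemma inA (T : Type) (l1 l2 : list T) x : List.In x (l1 ++ l2)%list -> List.In x l1 \/ List.In x l2.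
Proof. exact: List.in_app_or. Qed.
Lemma inM (T U : Type) (f : T -> U) l y : List.In y (List.map f l) -> exists x, f x = y /\ List.In x l.
Proof. exact: (proj1 (List.in_map_iff _ _ _)). Qed.
Lemma inP (T U : Type) (l1 : list T) (l2 : list U) x y : List.In (x, y) (List.list_prod l1 l2) -> List.In x l1 /\ List.In y l2.
Proof. exact: (proj1 (List.in_prod_iff _ _ _ _)). Qed.

Theorem farkas d : forall C : list ((nat -> R) * R),
  (exists y, forall p, List.In p C -> dotn d p.1 y + p.2 <= 0) \/
  (exists q, fmder C q /\ (forall i, (i < d)%N -> q.1 i = 0) /\ 0 < q.2).
Proof.
elim: d => [|d IH] C.
  have [H|H] := pselect (forall p, List.In p C -> p.2 <= 0).
    by left; exists (fun=> 0) => p /H; rewrite /dotn big_ord0 add0r.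
  right; move/existsNP: H => [p /not_implyP [hp /negP]]; rewrite -ltNge => hp2.
  by exists p; split; [exact: d_base|split].
pose Z := List.filter (fun p : (nat -> R) * R => p.1 d == 0) C.
pose Pp := List.filter (fun p : (nat -> R) * R => 0 < p.1 d) C.
pose Nn := List.filter (fun p : (nat -> R) * R => p.1 d < 0) C.
pose f := fun pq : ((nat -> R) * R) * ((nat -> R) * R) =>
   comb (- pq.2.1 d) pq.1 (pq.1.1 d) pq.2.
pose C' := (Z ++ List.map f (List.list_prod Pp Nn))%list.
have C'd : forall p, List.In p C' -> p.1 d = 0.
  move=> p; rewrite /C' /Z /Pp /Nn => hp.
  have [h|h] := inA hp.
    by have [_ h'] := inF h; apply/eqP.
  have [[p1 q1] [<- _]] := inM h; rewrite /=; ring.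
have C'C : forall p, List.In p C' -> fmder C p.
  move=> p; rewrite /C' /Z /Pp /Nn => hp.
  have [h|h] := inA hp.
    by have [h' _] := inF h; apply: d_base.
  have [[p1 q1] [<- h0]] := inM h.
  have [h1 h2] := inP h0.
  have [h1a h1'] := inF h1; have [h2a h2'] := inF h2.
  apply: d_comb; [exact: d_base|exact: d_base| |].
    by rewrite oppr_ge0 ltW.
  exact: ltW.
have [[y' Hy']|[q [hq [hq0 hq2]]]] := IH C'; last first.
  right; exists q; split; first exact: deriv_trans hq.
  split => // i; rewrite ltnS leq_eqVlt => /orP [/eqP ->|]; last exact: hq0.
  elim: hq {hq0 hq2} => [p /C'd //|p0 q0 a b _ e1 _ e2 _ _] /=; rewrite e1 e2; ring.
left.
pose g := fun p : (nat -> R) * R => - (dotn d p.1 y' + p.2) / p.1 d.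
have hLU : forall l u, List.In l (List.map g Nn) -> List.In u (List.map g Pp) -> l <= u.
  move=> l u hl hu.
  have [q [<- hq]] := inM hl; have [p [<- hp]] := inM hu.
  have [hq1 hq2] := inF hq; have [hp1 hp2] := inF hp.
  apply: frac_le => //.
  have hin : List.In (f (p, q)) C'.
    apply: List.in_or_app; right; apply: List.in_map.
    by apply: List.in_prod.
  have := Hy' _ hin; rewrite dotn_comb /=.
  move=> h; apply: le_trans h; rewrite le_eqVlt; apply/orP; left; apply/eqP; ring.
have [t [Ht1 Ht2]] := sep_lu hLU.
exists (fun i => if i == d then t else y' i) => p hp.
have -> : dotn d.+1 p.1 (fun i => if i == d then t else y' i) =
          dotn d p.1 y' + p.1 d * t.
  rewrite /dotn big_ord_recr /= eqxx; congr (_ + _).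
  by apply: eq_bigr => i _; rewrite ltn_eqF.
case: (ltgtP (p.1 d) 0) => hs.
- have hN : List.In p Nn by exact: Fin.
  have := Ht1 _ (List.in_map g _ _ hN); rewrite /g.
  rewrite ler_ndivrMr // => h; rewrite -lerBrDl sub0r. lra.
- have hP : List.In p Pp by exact: Fin.
  have := Ht2 _ (List.in_map g _ _ hP); rewrite /g.
  rewrite ler_pdivlMr // => h. lra.
- have hZ : List.In p C'.
    by apply: List.in_or_app; left; apply: Fin => //; apply/eqP.
  by have := Hy' _ hZ; rewrite hs mul0r addr0.
Qed.

End Farkas.

Section Basics.
Variable R : realType.

Lemma sum_only n (j : 'I_n) (F : 'I_n -> R) : (forall l, l != j -> F l = 0) ->
  \sum_l F l = F j.
Proof. by move=> h; rewrite (bigD1 j) //= big1 ?addr0. Qed.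
Arguments sum_only {n} j {F}.


Lemma frob_diag n (M X : 'M[R]_n) : is_diag_mx M ->
  frob M X = \sum_j M j j * X j j.
Proof.
move=> /is_diag_mxP h; rewrite /frob /mxtrace; apply: eq_bigr => j _.
rewrite mxE (sum_only j) // => k hk; rewrite h ?mul0r //.
by rewrite eq_sym.
Qed.

Lemma linfE n (c x : 'cV[R]_n) : linf c x = \sum_j c j 0 * x j 0.
Proof. by rewrite /linf mxE; apply: eq_bigr => j _; rewrite mxE. Qed.

Lemma quadfE n (M : 'M[R]_n) x :
  quadf M x = \sum_k \sum_l x k 0 * M k l * x l 0.
Proof.
rewrite /quadf mxE (exchange_big) /=; apply: eq_bigr => l _.
rewrite mxE mulr_suml; apply: eq_bigr => k _; by rewrite !mxE.
Qed.

Lemma quadf_diag n (M : 'M[R]_n) x : is_diag_mx M ->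
  quadf M x = \sum_j M j j * x j 0 ^+ 2.
Proof.
move=> /is_diag_mxP h; rewrite quadfE; apply: eq_bigr => k _.
rewrite (sum_only k); first by rewrite expr2; ring.
by move=> l hl; rewrite h ?mulr0 ?mul0r // eq_sym.
Qed.

Lemma frob_outer n (M : 'M[R]_n) x : frob M (x *m x^T) = quadf M x.
Proof.
rewrite /frob /quadf mulmxA mxtrace_mulC mulmxA /mxtrace big_ord1 //.
Qed.

Definition ev n (j : 'I_n) : 'cV[R]_n := \col_k (k == j)%:R.

Lemma quadf_ev n (M : 'M[R]_n) j : quadf M (ev j) = M j j.
Proof.
rewrite quadfE (sum_only j) => [|k hk]; last first.
  by apply: big1 => l _; rewrite !mxE (negbTE hk) !mul0r.
rewrite (sum_only j) => [|l hl]; first by rewrite !mxE eqxx mul1r mulr1.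
by rewrite !mxE (negbTE hl) mulr0.
Qed.

Lemma ev_neq0 n (j : 'I_n) : ev j != 0.
Proof. by apply/negP => /eqP /matrixP /(_ j 0); rewrite !mxE eqxx => /eqP; rewrite oner_eq0. Qed.

Lemma psd_diag n (M : 'M[R]_n) j : psd M -> 0 <= M j j.
Proof. by move=> [_ h]; rewrite -quadf_ev. Qed.

Lemma posdef_diag n (M : 'M[R]_n) j : posdef M -> 0 < M j j.
Proof. by move=> [_ h]; rewrite -quadf_ev; apply: h; apply: ev_neq0. Qed.

Lemma inIn (T : eqType) (x : T) (s : seq T) : x \in s -> List.In x s.
Proof. elim: s => //= y s IH; rewrite inE => /orP [/eqP ->|/IH]; by [left|right]. Qed.

Lemma sum_affine n (u p q : 'I_n -> R) t :
  \sum_j u j * (p j + t * q j) = \sum_j u j * p j + t * \sum_j u j * q j.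
Proof. by rewrite mulr_sumr -big_split; apply: eq_bigr => j _ /=; ring. Qed.

Definition vn n (v : 'I_n -> R) (t : nat) : R :=
  if (insub t : option 'I_n) is Some i then v i else 0.
Definition v2 n (u v : 'I_n -> R) (t : nat) : R :=
  if (t < n)%N then vn u t else vn v (t - n).

Lemma dot2 n (u v : 'I_n -> R) y :
  dotn (n + n) (v2 u v) y = \sum_i u i * y i + \sum_i v i * y (n + i)%N.
Proof.
rewrite /dotn big_split_ord /=; congr (_ + _); apply: eq_bigr => i _ /=.
  by rewrite /v2 ltn_ord /vn valK.
by rewrite /v2 ltnNge leq_addr /= addKn /vn valK.
Qed.

End Basics.
Arguments sum_only {R n} j {F}.

Section Tight.
Variables (R : realType) (n m : nat) (D : 'M[R]_n) (A : 'I_m -> 'M[R]_n)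
  (c : 'cV[R]_n) (a : 'I_m -> 'cV[R]_n) (b : 'I_m -> R).

Lemma sum_lin (I : finType) (al bt : R) (f g F : I -> R) :
  \sum_i (al * f i + bt * g i) * F i = al * \sum_i f i * F i + bt * \sum_i g i * F i.
Proof. by rewrite !mulr_sumr -big_split; apply: eq_bigr => i _ /=; ring. Qed.
Lemma sum_lin2 (I : finType) (al bt : R) (f g : I -> R) :
  \sum_i (al * f i + bt * g i) = al * \sum_i f i + bt * \sum_i g i.
Proof. by rewrite !mulr_sumr -big_split. Qed.

Definition gR (p : 'cV[R]_n * 'cV[R]_n) : R :=
  \sum_(j < n) D j j * p.2 j 0 + 2 * \sum_(j < n) c j 0 * p.1 j 0.
Definition linv i (p : 'cV[R]_n * 'cV[R]_n) : R :=
  \sum_(j < n) A i j j * p.2 j 0 + 2 * \sum_(j < n) a i j 0 * p.1 j 0.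

Variables (x z : 'cV[R]_n).
Hypothesis feas : R_feas A a b (x, z).
Hypothesis opt : forall p, R_feas A a b p -> gR (x, z) <= gR p.

Definition active i := linv i (x, z) == b i.
Definition tJ j := z j 0 == x j 0 ^+ 2.

Definition cobj : (nat -> R) * R := (v2 (fun j => 2 * c j 0) (fun j => D j j), 1).
Definition clin i : (nat -> R) * R := (v2 (fun j => 2 * a i j 0) (fun j => A i j j), 0).
Definition cq j : (nat -> R) * R :=
  (v2 (fun l => (l == j)%:R * (2 * x l 0)) (fun l => (l == j)%:R * -1), 1).
Definition Cs : list ((nat -> R) * R) :=
  cobj :: (List.map clin (List.filter active (enum 'I_m)) ++
           List.map cq (List.filter tJ (enum 'I_n)))%list.

Definition Gd (q : (nat -> R) * R) : Prop :=
  exists l0 (mu : 'I_m -> R) (lam : 'I_n -> R),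
  0 <= l0 /\ (forall i, 0 <= mu i) /\ (forall i, ~~ active i -> mu i = 0) /\
      (forall j, 0 <= lam j) /\ (forall j, ~~ tJ j -> lam j = 0) /\
      (forall y, dotn (n + n) q.1 y = l0 * dotn (n + n) cobj.1 y +
          \sum_i mu i * dotn (n + n) (clin i).1 y +
          \sum_j lam j * dotn (n + n) (cq j).1 y) /\
      q.2 = l0 + \sum_j lam j.

Lemma Gd_deriv q : fmder Cs q -> Gd q.
Proof.
elim => [p|p q' al bt _ [l0 [mu [lam [h1 [h2 [h3 [h4 [h5 [h6 h7]]]]]]]]]
                      _ [l0' [mu' [lam' [h1' [h2' [h3' [h4' [h5' [h6' h7']]]]]]]]] ha hb].
  case=> [<-|hh]; last (have [hh'|hh'] := inA hh; move: hh'); rewrite -?/Cs.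
  - exists 1, (fun=> 0), (fun=> 0); do !split => //.
      by move=> y; rewrite !big1 ?addr0 ?mul1r // => i _; rewrite mul0r.
    by rewrite big1 ?addr0.
  - move=> hh'; have [i [<- hh2]] := inM hh'; have [_ hi] := inF hh2.
    exists 0, (fun k => (k == i)%:R), (fun=> 0); do !split => //.
    + by move=> k hk; case: eqP hk => // ->; rewrite hi.
    + move=> y; rewrite mul0r add0r [X in _ + X]big1 ?addr0 => [|j _]; last by rewrite mul0r.
      by rewrite (sum_only i) ?eqxx ?mul1r // => k hk; rewrite (negbTE hk) mul0r.
    + by rewrite big1 ?addr0.
  - move=> hh'; have [j [<- hh2]] := inM hh'; have [_ hj] := inF hh2.
    exists 0, (fun=> 0), (fun k => (k == j)%:R); do !split => //.
    + by move=> k hk; case: eqP hk => // ->; rewrite hj.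
    + move=> y; rewrite mul0r add0r [X in X + _]big1 ?add0r => [|i _]; last by rewrite mul0r.
      by rewrite (sum_only j) ?eqxx ?mul1r // => k hk; rewrite (negbTE hk) mul0r.
    + by rewrite add0r (sum_only j) ?eqxx // => k hk; rewrite (negbTE hk).
exists (al * l0 + bt * l0'), (fun i => al * mu i + bt * mu' i),
  (fun j => al * lam j + bt * lam' j); do !split.
- by rewrite addr_ge0 // mulr_ge0.
- by move=> i; rewrite addr_ge0 // mulr_ge0.
- by move=> i hi; rewrite h3 // h3' // !mulr0 addr0.
- by move=> j; rewrite addr_ge0 // mulr_ge0.
- by move=> j hj; rewrite h5 // h5' // !mulr0 addr0.
- by move=> y; rewrite dotn_comb h6 h6' !sum_lin; ring.
- by rewrite /= h7 h7' sum_lin2; ring.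
Qed.


Lemma dcobj y : dotn (n + n) cobj.1 y =
  2 * \sum_j c j 0 * y j + \sum_j D j j * y (n + j)%N.
Proof. by rewrite dot2 mulr_sumr; congr (_ + _); apply: eq_bigr => j _; rewrite mulrA. Qed.

Lemma dclin i y : dotn (n + n) (clin i).1 y =
  2 * \sum_j a i j 0 * y j + \sum_j A i j j * y (n + j)%N.
Proof. by rewrite dot2 mulr_sumr; congr (_ + _); apply: eq_bigr => j _; rewrite mulrA. Qed.

Lemma dcq j y : dotn (n + n) (cq j).1 y = 2 * x j 0 * y j - y (n + j)%N.
Proof.
rewrite dot2 (sum_only j) => [|l hl]; last by rewrite (negbTE hl) !mul0r.
rewrite (sum_only j) => [|l hl]; last by rewrite (negbTE hl) !mul0r.
by rewrite eqxx /= !mul1r mulN1r.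
Qed.

Lemma v2l (f g : 'I_n -> R) (i : 'I_n) : v2 f g i = f i.
Proof. by rewrite /v2 ltn_ord /vn valK. Qed.
Lemma v2r (f g : 'I_n -> R) (i : 'I_n) : v2 f g (n + i)%N = g i.
Proof. by rewrite /v2 ltnNge leq_addr /= addKn /vn valK. Qed.

Lemma le_sum_term (I : finType) (F : I -> R) i : (forall j, 0 <= F j) -> F i <= \sum_j F j.
Proof. by move=> h; rewrite (bigD1 i) //= lerDl sumr_ge0. Qed.

Lemma inCs_lin i : active i -> List.In (clin i) Cs.
Proof.
move=> hi; right; apply: List.in_or_app; left; apply: List.in_map.
by apply: Fin => //; apply: inIn; rewrite mem_enum.
Qed.
Lemma inCs_q j : tJ j -> List.In (cq j) Cs.
Proof.
move=> hj; right; apply: List.in_or_app; right; apply: List.in_map.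
by apply: Fin => //; apply: inIn; rewrite mem_enum.
Qed.


Variables (xs zs : 'cV[R]_n).
Hypothesis hsl1 : forall i, linv i (xs, zs) <= b i.
Hypothesis hsl2 : forall j, xs j 0 ^+ 2 < zs j 0.
Hypothesis hS : forall k, S_set D A c a k = set0.

Lemma no_dir y : ~ (forall p, List.In p Cs -> dotn (n + n) p.1 y + p.2 <= 0).
Proof.
move=> Hy.
have hobj := Hy _ (or_introl erefl).
have hlin i : active i -> dotn (n + n) (clin i).1 y <= 0.
  by move=> hi; have := Hy _ (inCs_lin hi); rewrite addr0.
have hq j : tJ j -> dotn (n + n) (cq j).1 y + 1 <= 0 by move=> hj; apply: Hy; exact: inCs_q.
move: hobj; rewrite dcobj /= => hobj.
set dx := fun j : 'I_n => y j.
set dz := fun j : 'I_n => y (n + j)%N.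
set g := fun i => dotn (n + n) (clin i).1 y.
set s := fun i => b i - linv i (x, z).
set h := fun j : 'I_n => 2 * x j 0 * dx j - dz j.
set r := fun j : 'I_n => z j 0 - x j 0 ^+ 2.
have [feas1 feas2] := feas.
have s0 i : 0 <= s i by rewrite /s subr_ge0; apply: feas1.
have r0 j : 0 <= r j by rewrite /r subr_ge0; apply: feas2.
set T1 := fun i => `|g i| / s i.
set T2 := fun j => dx j ^+ 2 + (`|h j| + dx j ^+ 2) / r j.
have T10 i : 0 <= T1 i by rewrite /T1 divr_ge0.
have T20 j : 0 <= T2 j by rewrite /T2 addr_ge0 ?sqr_ge0 // divr_ge0 // addr_ge0 ?sqr_ge0.
set S := \sum_i T1 i + \sum_j T2 j.
have S0 : 0 <= S by rewrite addr_ge0 // sumr_ge0.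
set t := (1 + S)^-1.
have S1 : 0 < 1 + S by rewrite ltr_pwDl.
have t0 : 0 < t by rewrite invr_gt0.
have tS : t * (1 + S) = 1 by rewrite mulVf // gt_eqF.
have t1 : t <= 1.
  have : t * 1 <= t * (1 + S) by rewrite ler_pM2l // lerDl.
  by rewrite tS mulr1.
have tM M : 0 <= M -> M <= S -> t * M <= 1.
  by move=> hM hMS; rewrite -tS ler_pM2l //; lra.
have tT1 i : t * T1 i <= 1.
  by apply: tM => //; apply: le_trans (le_sum_term i T10) _; rewrite lerDl sumr_ge0.
have tT2 j : t * T2 j <= 1.
  by apply: tM => //; apply: le_trans (le_sum_term j T20) _; rewrite lerDr sumr_ge0.
pose p' := (\col_j (x j 0 + t * dx j), \col_j (z j 0 + t * dz j)).
have linp i : linv i p' = linv i (x, z) + t * g i.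
  rewrite /linv /= /g dclin.
  under eq_bigr do rewrite mxE.
  under [in X in _ + 2 * X]eq_bigr do rewrite mxE.
  rewrite !sum_affine; ring.
have gp : gR p' = gR (x, z) + t * (2 * \sum_j c j 0 * y j + \sum_j D j j * y (n + j)%N).
  rewrite /gR /=.
  under eq_bigr do rewrite mxE.
  under [in X in _ + 2 * X]eq_bigr do rewrite mxE.
  rewrite !sum_affine; ring.
have fp : R_feas A a b p'.
  split => [i|j].
    change (linv i p' <= b i); rewrite linp.
    have [hi|hi] := boolP (active i).
      rewrite (eqP hi) -{2}(addr0 (b i)) lerD2l.
      by apply: mulr_ge0_le0; [exact: ltW | rewrite /g; exact: (hlin i hi)].
    have si : 0 < s i by rewrite lt_neqAle s0 andbT eq_sym subr_eq0 eq_sym.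
    have := tT1 i; rewrite /T1 mulrA ler_pdivrMr // mul1r => hts.
    rewrite -lerBrDl; apply: le_trans hts; rewrite /s /linv /=.
    rewrite ler_pM2l //; exact: ler_norm.
  rewrite !mxE.
  have [hj|hj] := boolP (tJ j).
    have := hq j hj; rewrite dcq -/(h j) => hh.
    have := tT2 j; rewrite /T2 mulrDr => ht2.
    have e : z j 0 = x j 0 ^+ 2 by apply/eqP.
    have hr : r j = 0 by rewrite /r e subrr.
    have z0 : (`|h j| + dx j ^+ 2) / r j = 0 by rewrite hr invr0 mulr0.
    rewrite z0 mulr0 addr0 in ht2.
    have k1 : t * (h j + 1) <= 0 by apply: mulr_ge0_le0 => //; exact: ltW.
    have k2 : t * (t * dx j ^+ 2 - 1) <= 0.
      by apply: mulr_ge0_le0; [exact: ltW | rewrite subr_le0].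
    rewrite e; move: k1 k2; rewrite /h => k1 k2.
    rewrite -subr_ge0; rewrite -subr_ge0 in k1.
    have -> : x j 0 ^+ 2 + t * dz j - (x j 0 + t * dx j) ^+ 2 =
      0 - t * (2 * x j 0 * dx j - dz j + 1) + (0 - t * (t * dx j ^+ 2 - 1)) by ring.
    by apply: addr_ge0 => //; rewrite subr_ge0.
  have rj : 0 < r j by rewrite lt_neqAle r0 andbT eq_sym /r subr_eq0.
  have := tT2 j; rewrite /T2 mulrDr => ht2.
  have h3 : t * ((`|h j| + dx j ^+ 2) / r j) <= 1.
    by apply: le_trans ht2; rewrite lerDr mulr_ge0 // ?sqr_ge0 // ltW.
  move: h3; rewrite mulrA ler_pdivrMr // mul1r => h3.
  have h4 : h j <= `|h j| := ler_norm _.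
  have : r j = z j 0 - x j 0 ^+ 2 by [].
  rewrite /h in h4 h3 * => er.
  have h5 : 0 <= dx j ^+ 2 := sqr_ge0 _.
  nra.
have := opt fp; rewrite gp.
have : t * (2 * \sum_j c j 0 * y j + \sum_j D j j * y (n + j)%N) <= - t.
  have k : t * (2 * \sum_j c j 0 * y j + \sum_j D j j * y (n + j)%N + 1) <= 0.
    by apply: mulr_ge0_le0; [exact: ltW|exact: hobj].
  by rewrite mulrDr mulr1 in k; lra.
lra.
Qed.

Lemma tight k : z k 0 = x k 0 ^+ 2.
Proof.
apply/eqP; apply: contraT => hk.
have [[y Hy]|[q [hq [hq0 hq2]]]] := farkas (n + n) Cs.
  by have := no_dir Hy.
have [l0 [mu [lam [h1 [h2 [h3 [h4 [h5 [h6 h7]]]]]]]]] := Gd_deriv hq.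
have hZ yy : l0 * dotn (n + n) cobj.1 yy + \sum_i mu i * dotn (n + n) (clin i).1 yy +
          \sum_j lam j * dotn (n + n) (cq j).1 yy = 0.
  rewrite -h6 /dotn big1 // => i _; by rewrite hq0 ?mul0r.
rewrite h7 in hq2.
have lamk : lam k = 0 by apply: h5.
have [l0z|l0nz] := eqVneq l0 0.
  pose y0 := v2 (fun j => xs j 0 - x j 0) (fun j => zs j 0 - z j 0).
  pose L i := linv i (xs, zs) - linv i (x, z).
  pose Q j := 2 * x j 0 * (xs j 0 - x j 0) - (zs j 0 - z j 0).
  have E1 : forall (u : 'I_n -> R) (p q : 'I_n -> R), \sum_j u j * (p j - q j) =
       \sum_j u j * p j - \sum_j u j * q j.
    by move=> u p0 q0; rewrite -sumrB; apply: eq_bigr => j _; ring.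
  have eL i : dotn (n + n) (clin i).1 y0 = L i.
    rewrite dclin /y0.
    under eq_bigr do rewrite v2l.
    under [X in _ + X]eq_bigr do rewrite v2r.
    by rewrite !E1 /L /linv /=; ring.
  have eQ j : dotn (n + n) (cq j).1 y0 = Q j by rewrite dcq /y0 v2l v2r.
  have e : \sum_i mu i * L i + \sum_j lam j * Q j = 0.
    have := hZ y0; rewrite l0z mul0r add0r.
    by under eq_bigr do rewrite eL; under [X in _ + X]eq_bigr do rewrite eQ.
  have t1 : \sum_i mu i * L i <= 0.
    apply: sumr_le0 => i _.
    have [hi|hi] := boolP (active i); last by rewrite h3 // mul0r.
    apply: mulr_ge0_le0 => //.
    by rewrite /L (eqP hi) subr_le0.
  have Fle j : lam j * Q j <= 0.
    have [hj|hj] := boolP (tJ j); last by rewrite h5 // mul0r.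
    apply: mulr_ge0_le0 => //.
    move/eqP: hj => ej; rewrite /Q ej.
    have := hsl2 j; have := sqr_ge0 (xs j 0 - x j 0) => u1 u2.
    nra.
  have Fsum : \sum_j lam j * Q j = 0.
    apply/eqP; rewrite eq_le sumr_le0 //=.
    have : 0 <= - \sum_i mu i * L i by rewrite oppr_ge0.
    by move/eqP: e; rewrite addrC addr_eq0 => /eqP ->.
  have Fz : forall j, lam j * Q j = 0.
    move=> j; apply/eqP; rewrite -oppr_eq0; apply/eqP.
    apply: (@psumr_eq0P _ _ xpredT (fun j => - (lam j * Q j))) => //.
      by move=> j0 _; rewrite oppr_ge0.
    by rewrite sumrN Fsum oppr0.
  have lz j : lam j = 0.
    have [hj|hj] := boolP (tJ j); last exact: h5.
    have := Fz j; move/eqP: hj => ej; rewrite /Q ej.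
    move/eqP; rewrite mulf_eq0 => /orP [/eqP //|/eqP u3].
    have := hsl2 j; have := sqr_ge0 (xs j 0 - x j 0) => u1 u2.
    exfalso; move: u3; nra.
  by move: hq2; rewrite l0z add0r big1 // ltxx.
have l0p : 0 < l0 by rewrite lt_neqAle eq_sym l0nz.
have sv2l0 (f g : 'I_n -> R) : \sum_l f l * v2 (fun=> 0) g l = 0.
  by apply: big1 => l _; rewrite v2l mulr0.
have sv2r0 (f g : 'I_n -> R) : \sum_l f l * v2 g (fun=> 0) (n + l)%N = 0.
  by apply: big1 => l _; rewrite v2r mulr0.
have sind (f : 'I_n -> R) j : \sum_l f l * (l == j)%:R = f j.
  by rewrite (sum_only j) ?eqxx ?mulr1 // => l hl; rewrite (negbTE hl) mulr0.
have Ez j : l0 * D j j + \sum_i mu i * A i j j = lam j.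
  pose ez : nat -> R := v2 (fun=> 0 : R) (fun l : 'I_n => (l == j)%:R).
  have d1 : dotn (n + n) cobj.1 ez = D j j.
    by rewrite dcobj /ez sv2l0 mulr0 add0r; under eq_bigr do rewrite v2r; rewrite sind.
  have s2 : \sum_i mu i * dotn (n + n) (clin i).1 ez = \sum_i mu i * A i j j.
    apply: eq_bigr => i _; rewrite dclin /ez sv2l0 mulr0 add0r.
    by under eq_bigr do rewrite v2r; rewrite sind.
  have s3 : \sum_l lam l * dotn (n + n) (cq l).1 ez = - lam j.
    rewrite (sum_only j) => [|l hl]; rewrite dcq /ez v2l v2r.
      by rewrite eqxx mulr0 sub0r mulrN1.
    by rewrite (negbTE hl) mulr0 subr0 mulr0.
  have := hZ ez; rewrite d1 s2 s3 => /eqP; rewrite subr_eq0 => /eqP //.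
have Ex : l0 * c k 0 + \sum_i mu i * a i k 0 = 0.
  pose ex : nat -> R := v2 (fun l : 'I_n => (l == k)%:R : R) (fun=> 0).
  have d1 : dotn (n + n) cobj.1 ex = 2 * c k 0.
    by rewrite dcobj /ex sv2r0 addr0; under eq_bigr do rewrite v2l; rewrite sind.
  have s2 : \sum_i mu i * dotn (n + n) (clin i).1 ex = 2 * \sum_i mu i * a i k 0.
    rewrite mulr_sumr; apply: eq_bigr => i _; rewrite dclin /ex sv2r0 addr0.
    by under eq_bigr do rewrite v2l; rewrite sind; ring.
  have s3 : \sum_l lam l * dotn (n + n) (cq l).1 ex = 0.
    rewrite (sum_only k) => [|l hl]; rewrite dcq /ex v2l v2r.
      by rewrite lamk mul0r.
    by rewrite (negbTE hl) mulr0 subr0 mulr0.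
  have := hZ ex; rewrite d1 s2 s3 addr0 => E.
  have : 2 * (l0 * c k 0 + \sum_i mu i * a i k 0) = 0.
    by apply: etrans E; ring.
  by move/eqP; rewrite mulf_eq0 pnatr_eq0 /= => /eqP.
have Sm (F : 'I_m -> R) : \sum_i (mu i / l0) * F i = (\sum_i mu i * F i) / l0.
  by rewrite mulr_suml; apply: eq_bigr => i _; rewrite mulrAC.
have key (V W U : R) : l0 * V + W = U -> V + W / l0 = U / l0.
  by move=> <-; field; rewrite l0nz.
have hmem : S_set D A c a k (fun i => mu i / l0).
  split; [|split; [|split]].
  - by rewrite Sm (key _ _ _ (Ez k)) lamk mul0r.
  - by rewrite Sm (key _ _ _ Ex) mul0r.
  - by move=> j _; rewrite Sm (key _ _ _ (Ez j)) divr_ge0 // ltW.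
  - by move=> i; rewrite divr_ge0 // ltW.
by rewrite hS in hmem.
Qed.

End Tight.

Section Bound.
Variables (R : realType) (n m : nat) (A : 'I_m -> 'M[R]_n)
  (a : 'I_m -> 'cV[R]_n) (b : 'I_m -> R).

Lemma abs_le_sq (t : R) : `|t| <= 1 + t ^+ 2.
Proof.
have h := sqr_ge0 (`|t| - 1); rewrite -[t ^+ 2]real_normK ?num_real //.
have h2 := normr_ge0 t; nra.
Qed.

Lemma bound_coord (yv : 'I_m -> R) : (forall i, 0 <= yv i) ->
  posdef (\sum_i yv i *: A i) -> forall j, exists bj : R,
  forall p, R_feas A a b p -> `|p.1 j 0| <= bj /\ `|p.2 j 0| <= bj.
Proof.
move=> y0 hpd j.
pose w l := \sum_i yv i * A i l l.
pose g l := \sum_i yv i * a i l 0.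
pose B := \sum_i yv i * b i.
pose K := \sum_l g l ^+ 2 / w l.
pose M0 := B + K.
have wpos l : 0 < w l.
  have := posdef_diag l hpd; rewrite summxE.
  by under eq_bigr do rewrite mxE.
pose bx := (1 + w j * `|M0| + `|g j|) / w j.
pose bz := (`|M0| + 2 * `|g j| * bx) / w j.
exists (bx + bz) => -[x z] [h1 h2] /=.
set X := x j 0; set Z := z j 0.
have key : \sum_l (w l * z l 0 + 2 * g l * x l 0) <= B.
  have e : \sum_i yv i * (\sum_l A i l l * z l 0 + 2 * \sum_l a i l 0 * x l 0) =
      \sum_l (w l * z l 0 + 2 * g l * x l 0).
    have L : forall i, yv i * (\sum_l A i l l * z l 0 + 2 * \sum_l a i l 0 * x l 0) =
        \sum_l yv i * (A i l l * z l 0 + 2 * (a i l 0 * x l 0)).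
      by move=> i; rewrite mulr_sumr -big_split mulr_sumr.
    under eq_bigr do rewrite L.
    rewrite exchange_big /=; apply: eq_bigr => l _.
    rewrite /w /g -mulrA !mulr_suml mulr_sumr -big_split /=.
    by apply: eq_bigr => i _; ring.
  rewrite -e; apply: ler_sum => i _; apply: ler_wpM2l => //; exact: h1.
pose U l := w l * z l 0 + 2 * g l * x l 0 + g l ^+ 2 / w l.
have U0 l : 0 <= U l.
  have wl := wpos l; have hz := h2 l.
  have : U l = (w l * (z l 0 - x l 0 ^+ 2)) + (w l * x l 0 + g l) ^+ 2 / w l.
    by rewrite /U; field; rewrite gt_eqF.
  move=> ->; apply: addr_ge0.
    by apply: mulr_ge0; [exact: ltW | rewrite subr_ge0].
  by apply: divr_ge0; [exact: sqr_ge0 | exact: ltW].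
have UM : U j <= M0.
  apply: le_trans (le_sum_term j U0) _.
  by rewrite /U big_split /= /M0 lerD2r.
have wj := wpos j; have hz := h2 j; rewrite -/X -/Z in hz.
have UjE : U j = w j * Z + 2 * g j * X + g j ^+ 2 / w j by [].
have sq : (w j * X + g j) ^+ 2 <= w j * M0.
  have : (w j * X + g j) ^+ 2 = w j * (w j * X ^+ 2 + 2 * g j * X + g j ^+ 2 / w j).
    by field; rewrite gt_eqF.
  move=> ->; rewrite ler_pM2l //; apply: le_trans UM; rewrite UjE lerD2r lerD2r.
  by rewrite ler_pM2l.
have habs := abs_le_sq (w j * X + g j).
have hM := ler_norm M0.
have hw : w j * M0 <= w j * `|M0| by rewrite ler_pM2l.
have ax : w j * `|X| <= 1 + w j * `|M0| + `|g j|.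
  have : `|w j * X| <= `|w j * X + g j| + `|g j|.
    by rewrite -[X in `|X|](addrK (g j)) ler_normB.
  rewrite normrM gtr0_norm //; lra.
have bxX : `|X| <= bx by rewrite /bx ler_pdivlMr // mulrC.
have gX : - (2 * g j * X) <= 2 * `|g j| * bx.
  have k1 : - (g j * X) <= `|g j| * `|X|.
    by rewrite -normrM -normrN; exact: ler_norm.
  have k2 : `|g j| * `|X| <= `|g j| * bx.
    by apply: ler_wpM2l => //; exact: normr_ge0.
  lra.
have gw : 0 <= g j ^+ 2 / w j by apply: divr_ge0; [exact: sqr_ge0 | exact: ltW].
have wZ : w j * Z <= `|M0| + 2 * `|g j| * bx by rewrite UjE in UM; lra.
have Zb : Z <= bz by rewrite /bz ler_pdivlMr // mulrC.
have X2 := sqr_ge0 X.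
have bx0 : 0 <= bx by apply: le_trans bxX; exact: normr_ge0.
have Z0 : 0 <= Z by lra.
split; first by lra.
by rewrite ger0_norm //; lra.
Qed.

End Bound.

Section Exist.
Variables (R : realType) (n m : nat) (D : 'M[R]_n) (A : 'I_m -> 'M[R]_n)
  (c : 'cV[R]_n) (a : 'I_m -> 'cV[R]_n) (b : 'I_m -> R).

Local Notation T := 'rV[R]_(n + n).

Lemma cont_lin (F : 'I_n -> R) (idx : 'I_n -> 'I_(n + n)) :
  continuous (fun v : T => \sum_j F j * v 0 (idx j)).
Proof.
apply: continuous_big; first exact: add_continuous.
move=> j _ v; apply: (@continuousM _ _ (fun=> F j) (fun v : T => v 0 (idx j))).
  exact: cst_continuous.
exact: coord_continuous.
Qed.


Definition xof (v : T) : 'cV[R]_n := \col_j v 0 (lshift n j).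
Definition zof (v : T) : 'cV[R]_n := \col_j v 0 (rshift n j).

Lemma xof_row (p : 'cV[R]_n * 'cV[R]_n) : xof (row_mx p.1^T p.2^T) = p.1.
Proof. by apply/matrixP => j k; rewrite [LHS]mxE row_mxEl mxE (ord1 k). Qed.
Lemma zof_row (p : 'cV[R]_n * 'cV[R]_n) : zof (row_mx p.1^T p.2^T) = p.2.
Proof. by apply/matrixP => j k; rewrite [LHS]mxE row_mxEr mxE (ord1 k). Qed.

Lemma exists_min : (exists p, R_feas A a b p) ->
  (exists yv : 'I_m -> R, (forall i, 0 <= yv i) /\ posdef (\sum_i yv i *: A i)) ->
  exists x z, R_feas A a b (x, z) /\ forall p, R_feas A a b p -> gR D c (x, z) <= gR D c p.
Proof.
move=> [p0 hp0] [yv [y0 hpd]].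
have [bf hbf] := fin_all_exists (bound_coord a b y0 hpd).
pose Bd := \sum_j `|bf j|.
have bfB j : bf j <= Bd.
  apply: le_trans (ler_norm _) _; apply: (le_sum_term j (F := fun j => `|bf j|)).
  by move=> l; exact: normr_ge0.
pose Fe := [set v : T | R_feas A a b (xof v, zof v)].
pose Box := [set v : T | forall i, (fun=> `[- Bd, Bd]%classic) i (v ord0 i)].
have cBox : compact Box by apply: rV_compact => _; exact: segment_compact.
have sub : Fe `<=` Box.
  move=> v hv i /=; rewrite in_itv /= -ler_norml.
  case: (split_ordP i) => j ->.
    have [h _] := hbf j _ hv; apply: le_trans (bfB j); move: h; by rewrite /= mxE.
  have [_ h] := hbf j _ hv; apply: le_trans (bfB j); move: h; by rewrite /= mxE.
pose L i := (fun v : T => \sum_j A i j j * v 0 (rshift n j) +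
             2 * \sum_j a i j 0 * v 0 (lshift n j)) @^-1` [set r | r <= b i].
pose Q j := (fun v : T => v 0 (lshift n j) ^+ 2 - v 0 (rshift n j)) @^-1` [set r : R | r <= 0].
have ex (F : 'I_n -> R) v : \sum_j F j * (xof v) j 0 = \sum_j F j * v 0 (lshift n j).
  by apply: eq_bigr => j _; rewrite mxE.
have ez (F : 'I_n -> R) v : \sum_j F j * (zof v) j 0 = \sum_j F j * v 0 (rshift n j).
  by apply: eq_bigr => j _; rewrite mxE.
have FeE : Fe = (\bigcap_(i in setT) L i) `&` (\bigcap_(j in setT) Q j).
  apply/seteqP; split => v /=.
    move=> [h1 h2]; split => [i _|j _]; rewrite /L /Q /=.
      by have := h1 i; rewrite /= ex ez.
    by have := h2 j; rewrite /= !mxE subr_le0.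
  move=> [h1 h2]; split => [i|j] /=.
    by have := h1 i I; rewrite /L /= ex ez.
  by have := h2 j I; rewrite /Q /= !mxE subr_le0.
have clL i : closed (L i).
  apply: (proj1 (continuous_closedP _)); last exact: closed_le.
  move=> v; apply: (@continuousD _ _ _ (fun v : T => \sum_j A i j j * v 0 (rshift n j))
    (fun v : T => 2 * \sum_j a i j 0 * v 0 (lshift n j))); first exact: cont_lin.
  apply: (@continuousM _ _ (fun=> 2) (fun v : T => \sum_j a i j 0 * v 0 (lshift n j))).
    exact: cst_continuous.
  exact: cont_lin.
have clQ j : closed (Q j).
  apply: (proj1 (continuous_closedP _)); last exact: closed_le.
  move=> v; apply: (@continuousD _ _ _ (fun v : T => v 0 (lshift n j) ^+ 2)
    (fun v : T => - v 0 (rshift n j))); last first.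
    by apply: (@continuousN _ _ _ (fun v : T => v 0 (rshift n j))); exact: coord_continuous.
  rewrite /GRing.exp /=.
  apply: (@continuousM _ _ (fun v : T => v 0 (lshift n j)) (fun v : T => v 0 (lshift n j)));
    exact: coord_continuous.
have clFe : closed Fe.
  rewrite FeE; apply: closedI; apply: closed_bigI => k _; [exact: clL | exact: clQ].
have cFe : compact Fe by apply: subclosed_compact clFe cBox sub.
have neFe : Fe !=set0.
  by exists (row_mx p0.1^T p0.2^T); rewrite /Fe /= xof_row zof_row -surjective_pairing.
pose f := fun v : T => gR D c (xof v, zof v).
have fE : f = (fun v : T => \sum_j D j j * v 0 (rshift n j) +
             2 * \sum_j c j 0 * v 0 (lshift n j)).
  by apply/funext => v; rewrite /f /gR /= ex ez.
have cf : {within Fe, continuous f}.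
  apply: continuous_subspaceT; rewrite fE => v.
  apply: (@continuousD _ _ _ (fun v : T => \sum_j D j j * v 0 (rshift n j))
    (fun v : T => 2 * \sum_j c j 0 * v 0 (lshift n j))); first exact: cont_lin.
  apply: (@continuousM _ _ (fun=> 2) (fun v : T => \sum_j c j 0 * v 0 (lshift n j))).
    exact: cst_continuous.
  exact: cont_lin.
have [v hv hmin] := compact_EVT_min neFe cFe cf.
exists (xof v), (zof v); split; first by move: hv; rewrite inE.
move=> p hp; have := hmin (row_mx p.1^T p.2^T).
rewrite /f xof_row zof_row -surjective_pairing; apply.
by rewrite inE /Fe /= xof_row zof_row -surjective_pairing.
Qed.

End Exist.

Lemma outer_diag (R : realType) n (x : 'cV[R]_n) j : (x *m x^T) j j = x j 0 ^+ 2.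
Proof. by rewrite mxE big_ord1 mxE expr2. Qed.

Theorem theorem2 (R : realType) (n m : nat) (D : 'M[R]_n) (A : 'I_m -> 'M[R]_n)
    (c : 'cV[R]_n) (a : 'I_m -> 'cV[R]_n) (b : 'I_m -> R) :
  is_diag_mx D -> (forall i, is_diag_mx (A i)) ->
  Assumption1 A a b ->
  (forall k : 'I_n, S_set D A c a k = set0) ->
  pstar D A c a b = vstar D A c a b /\ vstar D A c a b = cstar D A c a b.
Proof.
move=> hD hA [[x0 hx0] [hy [xs [X0 [hX0 [e e0 hint]]]]]] hS.
have Rf0 : exists p, R_feas A a b p.
  exists (x0, \col_j x0 j 0 ^+ 2); split => [i|j] /=; last by rewrite mxE.
  have := hx0 i; rewrite quadf_diag // linfE => h.
  by rewrite (eq_bigr (fun j => A i j j * x0 j 0 ^+ 2)) // => j _; rewrite mxE.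
have [x [z [feas opt]]] := exists_min D c Rf0 hy.
pose X1 := X0 + (e / 2)%:M.
have e2 : 0 < e / 2 by rewrite divr_gt0.
have e2e : e / 2 < e by rewrite ltr_pdivrMr // ltr_pMr // ltr1n.
have hX1 : S_feas A a b (xs, X1).
  apply: hint.
  - by rewrite /X1 raddfD /= hX0 tr_scalar_mx.
  - by move=> j; rewrite subrr normr0.
  - move=> j k; rewrite /X1 mxE (addrC (X0 j k)) addrK mxE.
    by case: (j == k) => /=; rewrite ?mulr1n ?mulr0n ?normr0 // gtr0_norm.
have hX0f : S_feas A a b (xs, X0).
  apply: hint => // [j|j k]; by rewrite subrr normr0.
pose zs := \col_j (X0 j j + e / 2).
have hsl1 i : linv A a i (xs, zs) <= b i.
  have [h _] := hX1; have := h i; rewrite frob_diag // linfE /linv /=.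
  rewrite (eq_bigr (fun j => A i j j * zs j 0)) // => j _.
  by rewrite /zs /X1 !mxE eqxx mulr1n.
have hsl2 j : xs j 0 ^+ 2 < zs j 0.
  have [_ h] := hX0f; have := psd_diag j h.
  have -> : (X0 - xs *m xs^T) j j = X0 j j - xs j 0 ^+ 2 by rewrite -outer_diag !mxE.
  rewrite subr_ge0 /zs mxE => h'; lra.
have ti := tight feas opt hsl1 hsl2 hS.
have pv : (pstar D A c a b <= vstar D A c a b)%E.
  apply: ereal_inf_le_tmp => _ [[xx XX] hp <-] /=.
  have [h1 h2] := hp; rewrite /= in h1 h2.
  exists (xx, \col_j XX j j).
    split => [i|j] /=.
      have := h1 i; rewrite frob_diag // linfE => h.
      by rewrite (eq_bigr (fun j => A i j j * XX j j)) // => j _; rewrite mxE.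
    have := psd_diag j h2.
    have -> : (XX - xx *m xx^T) j j = XX j j - xx j 0 ^+ 2 by rewrite -outer_diag !mxE.
    by rewrite subr_ge0 mxE.
  rewrite /= frob_diag // linfE.
  by rewrite (eq_bigr (fun j => D j j * XX j j)) // => j _; rewrite mxE.
have vc : (vstar D A c a b <= cstar D A c a b)%E.
  apply: ereal_inf_le_tmp => _ [xx hp <-] /=.
  exists (xx, xx *m xx^T); last by rewrite /= frob_outer.
  split => [i|] /=; first by rewrite frob_outer; exact: hp.
  rewrite subrr; split; first by rewrite trmx0.
  by move=> v; rewrite /quadf mulmx0 mul0mx mxE.
have cp : (cstar D A c a b <= pstar D A c a b)%E.
  have xP : P_feas A a b x.
    move=> i; rewrite quadf_diag // linfE.
    have [h _] := feas; have := h i; rewrite /=.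
    by rewrite (eq_bigr (fun j => A i j j * x j 0 ^+ 2)) // => j _; rewrite ti.
  have val : quadf D x + 2 * linf c x = gR D c (x, z).
    rewrite quadf_diag // linfE /gR /=.
    by congr (_ + _); apply: eq_bigr => j _; rewrite ti.
  apply: (@le_trans _ _ (quadf D x + 2 * linf c x)%:E).
    by apply: ereal_inf_lbound; exists x.
  apply: le_ereal_inf_tmp => _ [p hp <-]; rewrite lee_fin val.
  exact: opt.
split; apply/eqP; rewrite eq_le.
  by rewrite pv (le_trans vc cp).
by rewrite vc (le_trans cp pv).
Qed.
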